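(* Let $T$ be a tree, let $G$ be the graph obtained from $T$ by adding a new vertex $w$ adjacent to all vertices of $T$, and let $b\ge1$. If $\mathrm{bw}(T)\le b$, then $G$ is outer $(5b-5)$-planar.
   Context: For a linear order $\sigma\colon V(T)\to[n]$, the stretch of an edge $\{u,v\}$ is $|\sigma(u)-\sigma(v)|$; the bandwidth $\mathrm{bw}(T)$ is the minimum over all $\sigma$ of the maximum stretch of an edge. A circular drawing is a cyclic order $(v_1,\dots,v_n)$ of the vertices; edges $\{v_i,v_j\}$ ($i<j$) and $\{v_{i'},v_{j'}\}$ ($i'<j'$) cross if $i<i'<j<j'$ or $i'<i<j'<j$; a graph is outer $k$-planar if it has a circular drawing in which every edge crosses at most $k$ edges. *)

(* Defs.v *)
From mathcomp Require Import all_boot all_order.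
Set Implicit Arguments. Unset Strict Implicit. Unset Printing Implicit Defensive.

Definition ndist (m n : nat) : nat := maxn (m - n) (n - m).

Definition simple_graph (V : finType) (e : rel V) : Prop :=
  symmetric e /\ irreflexive e.

Definition is_tree (V : finType) (e : rel V) : Prop :=
  [/\ simple_graph e,
      (forall x y : V, connect e x y) &
      (forall s : seq V, uniq s -> 2 < size s -> ~~ cycle e s)].

Definition bw_le_b (V : finType) (e : rel V) (k : nat) : bool :=
  [exists s : {ffun V -> 'I_#|V|},
     injectiveb s &&
     [forall u, forall v, e u v ==> (ndist (s u) (s v) <= k)]].

Lemma bw_exists (V : finType) (e : rel V) : exists k, bw_le_b e k.
Proof.
exists #|V|; apply/existsP; exists [ffun x => enum_rank x].
apply/andP; split.
  apply/injectiveP => x y; rewrite !ffunE; exact: enum_rank_inj.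
apply/forallP => u; apply/forallP => v; apply/implyP => _.
rewrite /ndist geq_max; apply/andP; split.
  exact: leq_trans (leq_subr _ _) (ltnW (ltn_ord _)).
exact: leq_trans (leq_subr _ _) (ltnW (ltn_ord _)).
Qed.

Definition bandwidth (V : finType) (e : rel V) : nat := ex_minn (bw_exists e).

Definition cone (V : finType) (e : rel V) : rel (option V) :=
  fun x y => match x, y with
             | Some u, Some v => e u v
             | None, Some _ | Some _, None => true
             | None, None => false
             end.

Definition crosses (a b c d : nat) : bool :=
  let i := minn a b in let j := maxn a b in
  let i' := minn c d in let j' := maxn c d in
  ((i < i') && (i' < j) && (j < j')) || ((i' < i) && (i < j') && (j' < j)).

(* Each edge {x',y'} is counted once, via the orientation
   with s x' < s y'. *)
Definition outer_k_planar (W : finType) (e : rel W) (k : nat) : Prop :=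
  exists s : W -> 'I_#|W|, injective s /\
    forall x y : W, e x y ->
      #|[set p : W * W | e p.1 p.2 && (s p.1 < s p.2)
                         && crosses (s x) (s y) (s p.1) (s p.2)]| <= k.

(* Main.v *)
Require Import Defs.
From mathcomp Require Import all_boot all_order.
From mathcomp Require Import zify.

Lemma tree_par (V : finType) (e : rel V) (r : V) :
  is_tree e -> exists par : V -> V, forall u v, e u v -> par u = v \/ par v = u.
Proof.
case=> [[sym irr] conn acyc].
have dex : forall v, exists n, [exists p : n.-tuple V, path e r p && (last r p == v)].
  move=> v; case/connectP: (conn r v) => p pp lp.
  exists (size p); apply/existsP; exists (in_tuple p); by rewrite /= pp -lp eqxx.
pose d v := ex_minn (dex v).
have d_le : forall v q, path e r q -> last r q = v -> d v <= size q.
  move=> v q pq lq; rewrite /d; case: ex_minnP => n _; apply.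
  apply/existsP; exists (in_tuple q); by rewrite /= pq lq eqxx.
have d_wit : forall v, exists2 q, path e r q & (last r q = v /\ size q = d v).
  move=> v; rewrite /d; case: ex_minnP => n /existsP [q /andP [pq /eqP lq]] _.
  by exists (tval q) => //; split => //; exact: size_tuple.
have d0 : forall v, d v = 0 -> v = r.
  move=> v dv; case: (d_wit v) => q pq [lq sq]; rewrite dv in sq.
  by case: q sq pq lq.
have dpar : forall v, 0 < d v -> exists u, e u v && (d u < d v).
  move=> v dpos; case: (d_wit v) => q pq [lq sq].
  case/lastP: q pq lq sq => [|q x] pq lq sq; first by rewrite -sq in dpos.
  rewrite rcons_path in pq; case/andP: pq => pq ex.
  rewrite last_rcons in lq; subst x.
  exists (last r q); rewrite ex /=.
  have := d_le _ _ pq erefl. rewrite size_rcons in sq. lia.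
pose par v := odflt r [pick u | e u v && (d u < d v)].
have parP : forall v, 0 < d v -> e (par v) v /\ d (par v) < d v.
  move=> v dp; rewrite /par; case: pickP => [u /andP [] //| none].
  by case: (dpar v dp) => u H; rewrite none in H.
exists par => u v euv.
case: (eqVneq (par u) v) => [-> |nu]; first by left.
case: (eqVneq (par v) u) => [->|nv]; first by right.
exfalso.
have uv : u != v by apply/eqP => E; subst; rewrite irr in euv.
pose e' := [rel a b | e a b && ~~ (((a == u) && (b == v)) || ((a == v) && (b == u)))].
have e'sym : symmetric e'.
  move=> a b; rewrite /= sym; congr (_ && ~~ _).
  by case: (a == u) (a == v) (b == u) (b == v) => [] [] [] [].
have toR : forall n x, d x <= n -> connect e' x r.
  elim=> [|n IH] x dx.
    have: d x = 0 by lia.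
    by move/d0 => ->; exact: connect0.
  case: (posnP (d x)) => [/d0 -> | dp]; first exact: connect0.
  case: (parP x dp) => ep dl.
  apply: connect_trans (IH (par x) _); last lia.
  apply: connect1; rewrite /= sym ep /=.
  case: (eqVneq x u) => [->|xu]; first by rewrite (negbTE nu) (negbTE uv).
  case: (eqVneq x v) => [->|xv]; first by rewrite (negbTE nv) andbF orbF andFb.
  by [].
have cv := toR _ v (leqnn _). have cu := toR _ u (leqnn _).
have: connect e' v u.
  apply: connect_trans cv _. by rewrite (sym_connect_sym e'sym).
case/connectP => p pp lp.
move: lp; case/shortenP: pp => p' pp' up' _ lp.
case: p' pp' up' lp => [|y [|z q]] pp' up' lp.
- by move: uv; rewrite lp eqxx.
- rewrite /= in lp; subst y; move: pp'; rewrite /= !eqxx eq_sym (negbTE uv) /=.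
  by rewrite !andbF.
- apply: (negP (acyc (v :: y :: z :: q) up' isT)).
  have pe : path e v [:: y, z & q].
    by apply: sub_path pp'; move=> a c /andP [].
  rewrite /cycle rcons_path pe /=; rewrite /= in lp; by rewrite -lp euv.
Qed.
Lemma card_le_seq (T : finType) (A : {set T}) (h : T -> nat) (s : seq nat) :
  {in A &, injective h} -> (forall x, x \in A -> h x \in s) -> #|A| <= size s.
Proof.
move=> hi hs; rewrite cardE -(size_map h); apply: uniq_leq_size.
  rewrite map_inj_in_uniq ?enum_uniq // => a c; rewrite !mem_enum; exact: hi.
by move=> z /mapP [a]; rewrite mem_enum => Pa ->; exact: hs.
Qed.

Definition chv {V : eqType} (par : V -> V) (a c : V) := if par a == c then a else c.

Definition hcode {V : eqType} (σ : V -> nat) (par : V -> V) (p : option V * option V) : nat :=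
  match p with
  | (None, Some m) => 2 * σ m
  | (Some a, Some c) => (2 * σ (chv par a c)).+1
  | _ => 0
  end.

Definition pos {V : Type} (σ : V -> nat) (x : option V) : nat :=
  if x is Some v then (σ v).+1 else 0.

Lemma crossesE a b c d : crosses a b c d =
  ((minn a b < minn c d) && (minn c d < maxn a b) && (maxn a b < maxn c d)) ||
  ((minn c d < minn a b) && (minn a b < maxn c d) && (maxn c d < maxn a b)).
Proof. by []. Qed.

Lemma crosses_sym a b c d : crosses a b c d = crosses b a c d.
Proof. by rewrite !crossesE (minnC a) (maxnC a). Qed.

Section Main.
Variables (V : finType) (e : rel V) (b : nat) (sym : symmetric e)
  (σ : V -> nat) (σinj : injective σ)
  (str : forall u v, e u v -> ndist (σ u) (σ v) <= b)
  (par : V -> V) (hpar : forall u v, e u v -> par u = v \/ par v = u).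

Lemma chv_spec a c : e a c ->
  (chv par a c = a /\ par a = c) \/ (chv par a c = c /\ par c = a).
Proof.
rewrite /chv => eac; case: eqP => [H|H]; first by left.
by right; split => //; case: (hpar _ _ eac).
Qed.

Lemma ss_inj a c a' c' : e a c -> e a' c' -> σ a < σ c -> σ a' < σ c' ->
  chv par a c = chv par a' c' -> (a, c) = (a', c').
Proof.
move=> h1 h2 l1 l2 E.
case: (chv_spec _ _ h1) => [[k1 p1]|[k1 p1]]; case: (chv_spec _ _ h2) => [[k2 p2]|[k2 p2]];
  rewrite k1 k2 in E; subst.
- by [].
- lia.
- lia.
- by [].
Qed.

Lemma hcode_inj (A : {set option V * option V}) :
  (forall p, p \in A -> cone e p.1 p.2 && (pos σ p.1 < pos σ p.2)) ->
  {in A &, injective (hcode σ par)}.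
Proof.
move=> HA p q /HA Hp /HA Hq.
case: p q Hp Hq => [[a|] [c|]] [[a'|] [c'|]] //=; rewrite ?ltn0 ?andbF //.
- move=> /andP [e1 l1] /andP [e2 l2] H.
  have l1' : σ a < σ c by [].
  have l2' : σ a' < σ c' by [].
  have H' : σ (chv par a c) = σ (chv par a' c') by lia.
  by case: (ss_inj _ _ _ _ e1 e2 l1' l2' (σinj _ _ H')) => -> ->.
- move=> _ _ H; lia.
- move=> _ _ H; lia.
- move=> _ _ H; have H' : σ c = σ c' by lia.
  by rewrite (σinj _ _ H').
Qed.

Lemma inj2 : injective (fun j => (2 * j).+1).
Proof. move=> i j H; lia. Qed.
Lemma inj2' : injective (fun j => (2 * j)).
Proof. move=> i j H; lia. Qed.

Definition Aset (x y : option V) := [set p : option V * option V | cone e p.1 p.2 && (pos σ p.1 < pos σ p.2)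
     && crosses (pos σ x) (pos σ y) (pos σ p.1) (pos σ p.2)].

Lemma Aset_good x y p : p \in Aset x y -> cone e p.1 p.2 && (pos σ p.1 < pos σ p.2).
Proof. by rewrite inE => /andP []. Qed.

Lemma boundA v : #|Aset None (Some v)| <= 2 * b - 2.
Proof.
apply: leq_trans (@card_le_seq _ _ _ [seq (2*j).+1 | j <- iota ((σ v).+1 - b) (b - 1) ++ iota (σ v).+1 (b-1)] (@hcode_inj _ (Aset_good None (Some v))) _) _.
  move=> p; rewrite inE; case: p => [[a|] [c|]] //=; rewrite ?ltn0 ?andbF //.
    move=> /andP [/andP [eac l] cr]. have st := str _ _ eac. rewrite /ndist in st.
    rewrite crossesE in cr.
    rewrite (mem_map inj2).
    by case: (chv_spec _ _ eac) => [[-> _]|[-> _]]; rewrite mem_cat !mem_iota; lia.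
by rewrite size_map size_cat !size_iota; lia.
Qed.

Lemma boundB u v : e u v -> #|Aset (Some u) (Some v)| <= 4 * b - 4.
Proof.
move=> euv; have st0 := str _ _ euv; rewrite /ndist in st0.
pose a0 := minn (σ u) (σ v). pose c0 := maxn (σ u) (σ v).
apply: leq_trans (@card_le_seq _ _ _ ([seq (2*j) | j <- iota a0.+1 (b - 1)] ++
         [seq (2*j).+1 | j <- iota (a0.+1 - b) (b - 1) ++ iota a0.+1 (b-1) ++ iota c0.+1 (b-1)]) (@hcode_inj _ (Aset_good (Some u) (Some v))) _) _.
  move=> p; rewrite inE; case: p => [[a|] [c|]] //=; rewrite ?ltn0 ?andbF //.
    move=> /andP [/andP [eac l] cr]. have st := str _ _ eac. rewrite /ndist in st.
    rewrite crossesE in cr.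
    rewrite mem_cat (mem_map inj2) orbC.
    by case: (chv_spec _ _ eac) => [[-> _]|[-> _]]; rewrite !mem_cat !mem_iota /a0 /c0; lia.
  move=> /andP [/andP [_ l] cr].
  by rewrite mem_cat (mem_map inj2') mem_iota /a0 /c0; lia.
by rewrite size_cat !size_map !size_cat !size_iota; lia.
Qed.

End Main.

Theorem lemma5p7 (V : finType) (e : rel V) (b : nat) :
  is_tree e -> 1 <= b -> bandwidth e <= b ->
  outer_k_planar (cone e) (5 * b - 5).
Proof.
move=> tr b1 bw.
have: bw_le_b e (bandwidth e) by rewrite /bandwidth; case: ex_minnP.
case/existsP => sg /andP [/injectiveP sginj /forallP st].
pose σ v := nat_of_ord (sg v).
have σinj : injective σ by move=> x y /val_inj /sginj.
have str : forall u v, e u v -> ndist (σ u) (σ v) <= b.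
  move=> u v euv; have := forallP (st u) v; rewrite euv /= => H; exact: leq_trans H bw.
have [par hpar] : exists par : V -> V, forall u v, e u v -> par u = v \/ par v = u.
  case: (pickP (fun _ : V => true)) => [r _|none]; first exact: tree_par tr.
  by exists id => u; have := none u.
pose s (x : option V) := insubd (enum_rank (None : option V)) (pos σ x).
have sE : forall x, nat_of_ord (s x) = pos σ x.
  move=> x; rewrite /s val_insubd ifT //; rewrite card_option.
  by case: x => //= v; rewrite ltnS; exact: ltn_ord.
exists s; split.
  move=> x y /(congr1 (@nat_of_ord _)); rewrite !sE; case: x y => [x|] [y|] //= H.
  by congr Some; apply: σinj; lia.
move=> x y exy.
have -> : [set p | cone e p.1 p.2 && (s p.1 < s p.2) && crosses (s x) (s y) (s p.1) (s p.2)]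
   = Aset V e σ x y by apply/setP => p; rewrite !inE !sE.
case: x y exy => [u|] [v|] //= exy.
- by apply: leq_trans (boundB _ _ _ _ σinj str _ hpar _ _ exy) _; lia.
- have -> : Aset V e σ (Some u) None = Aset V e σ None (Some u).
    by apply/setP => p; rewrite !inE crosses_sym.
  by apply: leq_trans (boundA _ _ _ _ σinj str _ hpar u) _; lia.
- by apply: leq_trans (boundA _ _ _ _ σinj str _ hpar v) _; lia.
Qed.
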